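(* For $n\ge 1$ let $p_{n,j}$ be the number of independent sets of size $j$ in the path $P_n$ on $n$ vertices, and let $T_n=\sum_{j=1}^{\lceil n/2\rceil}(-1)^{j-1}j\,p_{n,j}$. Then for every integer $k\ge 0$, $$T_{3k+1}=T_{3k+3}=(-1)^k(k+1),\qquad T_{3k+2}=(-1)^k\,2(k+1).$$
   Context: An independent set of a graph is a set of vertices no two of which are adjacent. *)

(* Defs.v *)
From mathcomp Require Import all_boot all_order all_algebra.
Set Implicit Arguments. Unset Strict Implicit. Unset Printing Implicit Defensive.
Import GRing.Theory Num.Theory.

Definition path_adj (n : nat) : rel 'I_n :=
  fun i j => (i.+1 == j :> nat) || (j.+1 == i :> nat).

Definition independent (n : nat) (S : {set 'I_n}) : bool :=
  [forall x in S, forall y in S, ~~ path_adj x y].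

Definition pnj (n j : nat) : nat :=
  #|[set S : {set 'I_n} | independent S & #|S| == j]|.

Definition T (n : nat) : int :=
  (\sum_(1 <= j < (uphalf n).+1) (-1) ^+ (j.-1) * (j%:Z) * ((pnj n j)%:Z))%R.

(* Main.v *)
Require Import Defs.
From mathcomp Require Import all_boot all_order all_algebra ring zify.
Import GRing.Theory Num.Theory.
Set Implicit Arguments. Unset Strict Implicit.

Definition enc n (b : bool) (X : {set 'I_n}) : {set 'I_n.+1} :=
  [set x | if unlift ord0 x is Some i then i \in X else b].

Lemma enc_ord0 n b (X : {set 'I_n}) : (ord0 \in enc b X) = b.
Proof. by rewrite inE unlift_none. Qed.

Lemma enc_lift n b (X : {set 'I_n}) i : (lift ord0 i \in enc b X) = (i \in X).
Proof. by rewrite inE liftK. Qed.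

Lemma sum_split n (G : {set 'I_n.+1} -> int) :
  (\sum_S G S = \sum_(X : {set 'I_n}) (G (enc false X) + G (enc true X)))%R.
Proof.
pose dec (S : {set 'I_n.+1}) := (ord0 \in S, [set i : 'I_n | lift ord0 i \in S]).
rewrite (reindex (fun p : bool * {set 'I_n} => enc p.1 p.2)) /=; last first.
  exists dec => [[b X] _|S _] /=.
    congr pair; first by rewrite enc_ord0.
    by apply/setP => i; rewrite inE enc_lift.
  apply/setP => x; rewrite inE; case: unliftP => [j ->|->]; rewrite ?inE //.
rewrite -(pair_big xpredT xpredT (fun b X => G (enc b X))) /= big_bool /=.
by rewrite -big_split /=; apply: eq_bigr => X _; rewrite addrC.
Qed.

Lemma card_enc n b (X : {set 'I_n}) : #|enc b X| = b + #|X|.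
Proof.
rewrite -!sum1_card big_mkcond [in RHS]big_mkcond /= big_ord_recl enc_ord0 /=.
by case: b; congr (_ + _); apply: eq_bigr => i _; rewrite enc_lift.
Qed.

Lemma adj_ll n (i j : 'I_n) : path_adj (lift ord0 i) (lift ord0 j) = path_adj i j.
Proof. by rewrite /path_adj /= /bump !add1n. Qed.

Lemma adj_0l n (j : 'I_n) : path_adj ord0 (lift ord0 j) = (val j == 0).
Proof. by rewrite /path_adj /= /bump !add1n orbF eq_sym. Qed.

Lemma adj_sym n (i j : 'I_n) : path_adj i j = path_adj j i.
Proof. by rewrite /path_adj orbC. Qed.

Lemma adj_00 n : path_adj (ord0 : 'I_n.+1) ord0 = false.
Proof. by []. Qed.

Lemma indep_enc n b (X : {set 'I_n}) :
  independent (enc b X) = independent X && (b ==> [forall i in X, val i != 0]).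
Proof.
apply/idP/idP.
  move=> /forall_inP H; apply/andP; split.
    apply/forall_inP => x Hx; apply/forall_inP => y Hy.
    have := H (lift ord0 x); rewrite enc_lift => /(_ Hx) /forall_inP.
    by move=> /(_ (lift ord0 y)); rewrite enc_lift adj_ll => /(_ Hy).
  apply/implyP => Hb; apply/forall_inP => x Hx.
  have := H ord0; rewrite enc_ord0 => /(_ Hb) /forall_inP.
  by move=> /(_ (lift ord0 x)); rewrite enc_lift adj_0l => /(_ Hx).
case/andP=> /forall_inP HX Hb; apply/forall_inP => x Hx; apply/forall_inP => y Hy.
case: (unliftP ord0 x) Hx => [i ->|->]; case: (unliftP ord0 y) Hy => [j ->|->];
  rewrite ?enc_lift ?enc_ord0 ?adj_ll ?adj_0l ?adj_00 // => Hy Hx.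
- exact: (forall_inP (HX _ Hx) _ Hy).
- by rewrite adj_sym adj_0l; exact: (forall_inP (implyP Hb Hy) _ Hx).
- by move: (forall_inP (implyP Hb Hx) _ Hy).
Qed.

Local Open Scope ring_scope.

Definition Sw n (w : nat -> int) := \sum_(S : {set 'I_n} | independent S) w #|S|.
Definition Zw n (w : nat -> int) :=
  \sum_(S : {set 'I_n} | independent S && [forall i in S, val i != 0%N]) w #|S|.

Lemma nz_enc n b (X : {set 'I_n}) : [forall i in enc b X, val i != 0%N] = ~~ b.
Proof.
apply/forall_inP/idP => [H|Hb x].
  by apply/negP => Hb; have := H ord0; rewrite enc_ord0 => /(_ Hb).
by case: (unliftP ord0 x) => [i ->|->]; rewrite ?enc_ord0 ?lift0 // (negbTE Hb).
Qed.

Lemma Sw_S n w : Sw n.+1 w = Sw n w + Zw n (fun j => w j.+1).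
Proof.
rewrite /Sw /Zw big_mkcond sum_split big_split /=; congr (_ + _);
  rewrite [RHS]big_mkcond; apply: eq_bigr => X _;
  by rewrite indep_enc card_enc /= ?andbT ?add0n ?add1n.
Qed.

Lemma Zw_S n w : Zw n.+1 w = Sw n w.
Proof.
rewrite /Zw /Sw big_mkcond sum_split [RHS]big_mkcond; apply: eq_bigr => X _.
by rewrite !nz_enc !indep_enc !card_enc /= !andbT andbF addr0 add0n.
Qed.

Lemma set_I0 (S : {set 'I_0}) : S = set0.
Proof. by apply/setP => -[]. Qed.

Lemma Sw0 w : Sw 0 w = w 0%N.
Proof.
rewrite /Sw (eq_bigl (pred1 set0)) ?big_pred1_eq ?cards0 // => S /=.
rewrite (set_I0 S) eqxx; apply/forall_inP => x; by rewrite inE.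
Qed.

Lemma Zw0 w : Zw 0 w = w 0%N.
Proof.
rewrite /Zw (eq_bigl (pred1 set0)) ?big_pred1_eq ?cards0 // => S /=.
rewrite (set_I0 S) eqxx; apply/andP; split; apply/forall_inP => x; by rewrite inE.
Qed.

Lemma Sw1 w : Sw 1 w = w 0%N + w 1%N.
Proof. by rewrite Sw_S Sw0 Zw0. Qed.

Lemma Sw_SS n w : Sw n.+2 w = Sw n.+1 w + Sw n (fun j => w j.+1).
Proof. by rewrite Sw_S Zw_S. Qed.

Lemma Sw_agree n w1 w2 : (forall j, (j <= uphalf n)%N -> w1 j = w2 j) ->
  Sw n w1 = Sw n w2.
Proof.
suff H : forall n, (forall w1 w2, (forall j, (j <= uphalf n)%N -> w1 j = w2 j) -> Sw n w1 = Sw n w2)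
  /\ (forall w1 w2, (forall j, (j <= uphalf n.+1)%N -> w1 j = w2 j) -> Sw n.+1 w1 = Sw n.+1 w2).
  by case: (H n) => H1 _; apply: H1.
elim=> [|m [IH1 IH2]].
  split=> w1' w2' Hw; first by rewrite !Sw0 Hw.
  by rewrite !Sw1 !Hw.
split=> // w1' w2' Hw; rewrite !Sw_SS; congr (_ + _).
  apply: IH2 => j Hj; apply: Hw; move: Hj; rewrite !geq_uphalf_double -!mul2n; lia.
apply: IH1 => j Hj; apply: Hw; move: Hj; rewrite !geq_uphalf_double -!mul2n; lia.
Qed.

Definition wT (j : nat) : int := (-1) ^+ j.-1 * j%:Z.
Definition wA (j : nat) : int := (-1) ^+ j.

Lemma sum_ind N m (c : int) : \sum_(j < N) (if m == (j : nat) then c else 0) = if (m < N)%N then c else 0.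
Proof.
elim: N => [|N IH]; first by rewrite big_ord0.
rewrite big_ord_recr /= IH ltnS.
case: (ltngtP m N) => [H|H|H]; try subst m; rewrite ?eqxx ?ltnn ?leqnn ?addr0 ?add0r //.
Qed.

Lemma T_Sw n : T n = Sw n wT.
Proof.
rewrite /T.
transitivity (\sum_(0 <= j < (uphalf n).+1) wT j * (pnj n j)%:Z).
  by rewrite [RHS]big_ltn // /wT /= mulr0 mul0r add0r.
rewrite big_mkord.
transitivity (\sum_(j < (uphalf n).+1) \sum_(S : {set 'I_n} | independent S)
   (if #|S| == (j : nat) then wT #|S| else 0)).
  apply: eq_bigr => j _; rewrite /pnj -natz mulr_natr -sumr_const.
  rewrite big_mkcond [RHS]big_mkcond; apply: eq_bigr => S _; rewrite inE.
  by case: (independent S) => //=; case: eqP => // ->.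
rewrite exchange_big /=.
transitivity (Sw n (fun j => if (j < (uphalf n).+1)%N then wT j else 0)).
  by apply: eq_bigr => S _; rewrite sum_ind.
by apply: Sw_agree => j Hj; rewrite ltnS Hj.
Qed.

Lemma T_SS n : Sw n.+2 wT = Sw n.+1 wT - Sw n wT + Sw n wA.
Proof.
rewrite Sw_SS -addrA; congr (_ + _).
rewrite /Sw -sumrN -big_split; apply: eq_bigr => S _.
rewrite /wT /wA; case: #|S| => [|j] /=; rewrite ?exprS ?expr0; ring.
Qed.

Lemma A_SS n : Sw n.+2 wA = Sw n.+1 wA - Sw n wA.
Proof.
rewrite Sw_SS; congr (_ + _).
by rewrite /Sw -sumrN; apply: eq_bigr => S _; rewrite /wA exprS mulN1r.
Qed.

Lemma inv k : let s := ((-1) ^+ k : int) in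
  [/\ Sw (3 * k) wT = - s * k%:Z, Sw (3 * k).+1 wT = s * (k.+1)%:Z,
      Sw (3 * k) wA = s & Sw (3 * k).+1 wA = 0].
Proof.
elim: k => [|k [H0 H1 H2 H3]] /=.
  by rewrite muln0 Sw0 Sw1 Sw0 Sw1 /wT /wA /=; split; ring.
have e : (3 * k.+1 = (3 * k).+3)%N by rewrite mulnS add3n.
have A2 : Sw (3 * k).+2 wA = - (-1) ^+ k by rewrite A_SS H3 H2 sub0r.
have A3 : Sw (3 * k).+3 wA = - (-1) ^+ k by rewrite A_SS A2 H3 subr0.
have A4 : Sw (3 * k).+4 wA = 0 by rewrite A_SS A3 A2 subrr.
have T2 : Sw (3 * k).+2 wT = (-1) ^+ k * (2 * k.+1)%:Z by rewrite T_SS H1 H0 H2; ring.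
have T3 : Sw (3 * k).+3 wT = (-1) ^+ k * (k.+1)%:Z by rewrite T_SS T2 H1 H3; ring.
have T4 : Sw (3 * k).+4 wT = - (-1) ^+ k * (k.+2)%:Z by rewrite T_SS T3 T2 A2; ring.
rewrite e exprS mulN1r A3 A4 T3 T4; split => //; ring.
Qed.

Lemma aux (k : nat) :
  [/\ T (3 * k + 1)%N = ((-1) ^+ k * (k.+1)%:Z)%R,
      T (3 * k + 3)%N = ((-1) ^+ k * (k.+1)%:Z)%R
    & T (3 * k + 2)%N = ((-1) ^+ k * (2 * (k.+1))%N%:Z)%R].
Proof.
have [H0 H1 H2 H3] := inv k.
have A2 : Sw (3 * k).+2 wA = - (-1) ^+ k by rewrite A_SS H3 H2 sub0r.
have T2 : Sw (3 * k).+2 wT = (-1) ^+ k * (2 * k.+1)%:Z by rewrite T_SS H1 H0 H2; ring.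
have T3 : Sw (3 * k).+3 wT = (-1) ^+ k * (k.+1)%:Z by rewrite T_SS T2 H1 H3; ring.
by rewrite !T_Sw addn1 addn2 addn3 T2 T3 H1.
Qed.

Local Close Scope ring_scope.

Theorem lemma4p4 (k : nat) :
  [/\ T (3 * k + 1) = ((-1) ^+ k * (k.+1)%:Z)%R,
      T (3 * k + 3) = ((-1) ^+ k * (k.+1)%:Z)%R
    & T (3 * k + 2) = ((-1) ^+ k * (2 * (k.+1))%:Z)%R].
Proof. exact: aux k. Qed.
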